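(* Consider a rule of the PJR-Exact family run on $(\mathcal{A},k)$, and fix $j$ with $1\le j\le k-1$ such that iterations $1,\dots,j$ are all normal. Then no candidate in $C\setminus W_j$ is in a starving state after $j$ iterations; i.e., for every $c\in C\setminus W_j$ and every $i\in N_c$ with $\ell_j(i,c)>|A_i\cap W_j|$, we have $f_i^j\ge\frac{\ell_j(i,c)-|A_i\cap W_j|}{\ell_j(i,c)}$.
   Context: Setting: voters $N=\{1,\dots,n\}$, candidates $C=\{c_1,\dots,c_m\}$, approval ballots $A_i\subseteq C$, $\mathcal{A}=(A_1,\dots,A_n)$, $k$ a positive integer with $k\le|C|$, $q=n/k$, $N_c=\{i: c\in A_i\}$. Convention: $\max\emptyset=0$. Dissatisfaction level: for $W\subseteq C$ with $|W|\le k$ and $c\in C\setminus W$, $\ell(c,W)$ is the largest nonnegative integer $\ell$ with $\ell=\lfloor \frac{k}{n}|\{i\in N: c\in A_i,\ |A_i\cap W|<\ell\}|\rfloor$. PJR-Exact family: iterative procedures selecting $w_1,\dots,w_k$, $W_0=\emptyset$, $W_j=W_{j-1}\cup\{w_j\}$, $w_j\notin W_{j-1}$, with vote fractions $f_i^0=1$, $0\le f_i^j\le f_i^{j-1}$, such that at each iteration $j$: (a) $f_i^j=f_i^{j-1}$ for $i\notin N_{w_j}$; (b) with $s=\sum_{i\in N_{w_j}}f_i^{j-1}$, if $s>q$ then $\sum_{i\in N_{w_j}}(f_i^{j-1}-f_i^j)=q$, and if $s\le q$ then $f_i^j=0$ for all $i\in N_{w_j}$; (c) if some $c\in C\setminus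 W_{j-1}$ has $\sum_{i\in N_c}f_i^{j-1}\ge q$ then $\sum_{i\in N_{w_j}}f_i^{j-1}\ge q$. Notation along a run: $\ell_j(c)=\ell(c,W_j)$ for $c\in C\setminus W_j$; for $c\in C\setminus W_j$ and $i\in N_c$, $\ell_j(i,c)=\max_{c'\in A_i\setminus(W_j\cup\{c\})}\ell_j(c')$; $g_i^j(c)=0$ if $\ell_j(i,c)\le|A_i\cap W_j|$ and $g_i^j(c)=\frac{\ell_j(i,c)-|A_i\cap W_j|-1}{\ell_j(i,c)}$ otherwise. Normal state: $c\in C\setminus W_j$ is in normal state after $j$ iterations if (1) for each $i\in N_c$ with $\ell_j(i,c)>|A_i\cap W_j|$ we have $f_i^j\ge\frac{\ell_j(i,c)-|A_i\cap W_j|}{\ell_j(i,c)}$, and (2) $\sum_{i\in N_c}(f_i^j-g_i^j(c))\ge q$. A candidate $c\in C\setminus W_j$ is in a starving state after $j$ iterations if condition (1) fails. Normal iteration: iteration $j$ ($1\le j\le k$) is normal if $w_j$ is in normal state after $j-1$ iterations and, for each $i\in N_{w_j}$ with $\ell_{j-1}(i,w_j)>|A_i\cap W_{j-1}|$, $f_i^j\ge\frac{\ell_{j-1}(i,w_j)-|A_i\cap W_j|}{\ell_{j-1}(i,w_j)}$. *)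

(* Defs.v *)
From HB Require Import structures.
From mathcomp Require Import all_boot all_order all_algebra.
Set Implicit Arguments. Unset Strict Implicit. Unset Printing Implicit Defensive.
Import Order.TTheory GRing.Theory Num.Theory.

Section PJR.
Variables (n k : nat) (C : finType) (A : 'I_n -> {set C}).

Definition quota : rat := (n%:R / k%:R)%R.

Definition Nc (c : C) : {set 'I_n} := [set i | c \in A i].

Definition Wset (w : nat -> C) (j : nat) : {set C} := [set w (val t).+1 | t : 'I_j].

Definition cnt_below (c : C) (W : {set C}) (l : nat) : nat :=
  #|[set i in Nc c | #|A i :&: W| < l]|.

(* l(c, W): the largest nonnegative integer l with l = floor(k/n * cnt_below c W l).
   floor((k/n) * x) is written (k * x) %/ n.  Every such l is <= k (as cnt <= n),
   and l = 0 always qualifies, so the max over l < k+1 is the largest one. *)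
Definition dissat (c : C) (W : {set C}) : nat :=
  \max_(l < k.+1 | nat_of_ord l == (k * cnt_below c W l) %/ n) nat_of_ord l.

(* l_j(i, c) = max_{c' in A_i \ (W u {c})} l(c', W), with max of empty = 0 *)
Definition ell_voter (W : {set C}) (i : 'I_n) (c : C) : nat :=
  \max_(c' in A i :\: (W :|: [set c])) dissat c' W.

Definition gfun (W : {set C}) (i : 'I_n) (c : C) : rat :=
  if ell_voter W i c <= #|A i :&: W| then 0%R
  else (((ell_voter W i c)%:R - (#|A i :&: W|)%:R - 1) / (ell_voter W i c)%:R)%R.

(* The run (w, f) is a run of a PJR-Exact rule on (A, k):
   w j = w_j for 1 <= j <= k, f j i = f_i^j. *)
Definition pjr_exact_run (w : nat -> C) (f : nat -> 'I_n -> rat) : Prop :=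
  (forall i, f 0 i = 1%R) /\
  forall j, 1 <= j <= k ->
    [/\ w j \notin Wset w j.-1,
        (forall i, (0 <= f j i)%R /\ (f j i <= f j.-1 i)%R),
        (forall i, i \notin Nc (w j) -> f j i = f j.-1 i),
        (let s := (\sum_(i in Nc (w j)) f j.-1 i)%R in
           if (quota < s)%R
           then (\sum_(i in Nc (w j)) (f j.-1 i - f j i))%R = quota
           else forall i, i \in Nc (w j) -> f j i = 0%R) &
        ((exists c, c \notin Wset w j.-1 /\ (quota <= \sum_(i in Nc c) f j.-1 i)%R) ->
           (quota <= \sum_(i in Nc (w j)) f j.-1 i)%R)].

(* Condition (1) of the normal state (its failure = starving state). *)
Definition not_starving (w : nat -> C) (f : nat -> 'I_n -> rat) (j : nat) (c : C) : Prop :=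
  forall i, i \in Nc c ->
    #|A i :&: Wset w j| < ell_voter (Wset w j) i c ->
    (((ell_voter (Wset w j) i c)%:R - (#|A i :&: Wset w j|)%:R)
       / (ell_voter (Wset w j) i c)%:R <= f j i)%R.

Definition starving (w : nat -> C) (f : nat -> 'I_n -> rat) (j : nat) (c : C) : Prop :=
  ~ not_starving w f j c.

Definition normal_state (w : nat -> C) (f : nat -> 'I_n -> rat) (j : nat) (c : C) : Prop :=
  not_starving w f j c /\
  (quota <= \sum_(i in Nc c) (f j i - gfun (Wset w j) i c))%R.

Definition normal_iteration (w : nat -> C) (f : nat -> 'I_n -> rat) (j : nat) : Prop :=
  normal_state w f j.-1 (w j) /\
  forall i, i \in Nc (w j) ->
    #|A i :&: Wset w j.-1| < ell_voter (Wset w j.-1) i (w j) ->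
    (((ell_voter (Wset w j.-1) i (w j))%:R - (#|A i :&: Wset w j|)%:R)
       / (ell_voter (Wset w j.-1) i (w j))%:R <= f j i)%R.

End PJR.

(* Main.v *)
Require Import Defs.
From HB Require Import structures.
From mathcomp Require Import all_boot all_order all_algebra.
From mathcomp Require Import zify lra.
Import Order.TTheory GRing.Theory Num.Theory.

Section Aux.
Variables (n k : nat) (C : finType) (A : 'I_n -> {set C}).

Lemma cnt_mono_l c (W : {set C}) l1 l2 : l1 <= l2 -> cnt_below A c W l1 <= cnt_below A c W l2.
Proof.
move=> hl; apply: subset_leq_card; apply/subsetP => i; rewrite !inE.
by case/andP=> -> h; apply: leq_trans h hl.
Qed.

Lemma cnt_mono_W c (W W' : {set C}) l : W \subset W' -> cnt_below A c W' l <= cnt_below A c W l.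
Proof.
move=> hW; apply: subset_leq_card; apply/subsetP => i; rewrite !inE.
case/andP=> -> h /=; apply: leq_ltn_trans h.
by apply: subset_leq_card; apply: setIS.
Qed.

Lemma cnt_le_n c (W : {set C}) l : cnt_below A c W l <= n.
Proof. by rewrite -[n in _ <= n]card_ord; apply: max_card. Qed.

Lemma g_le_k c (W : {set C}) l : 0 < n -> (k * cnt_below A c W l) %/ n <= k.
Proof.
move=> hn; apply: leq_trans (leq_div2r n (leq_mul (leqnn k) (cnt_le_n c W l))) _.
by rewrite mulnK.
Qed.

Lemma g_mono c (W : {set C}) l1 l2 : l1 <= l2 ->
  (k * cnt_below A c W l1) %/ n <= (k * cnt_below A c W l2) %/ n.
Proof. by move=> h; apply: leq_div2r; apply: leq_mul => //; apply: cnt_mono_l. Qed.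

Lemma P_le_dissat c (W : {set C}) x : 0 < n -> x <= k ->
  x <= (k * cnt_below A c W x) %/ n -> x <= dissat k A c W.
Proof.
move=> hn hk0 hg0.
suff H : forall m x, k - x < m -> x <= k ->
  x <= (k * cnt_below A c W x) %/ n -> x <= dissat k A c W.
  by apply: (H (k - x).+1).
elim=> [|m IH] {hk0 hg0} x hm hk hg; first by rewrite ltn0 in hm.
have [hlt|hge] := ltnP x ((k * cnt_below A c W x) %/ n).
  apply: leq_trans (ltnW hlt) _; apply: IH.
  - have := g_le_k c W x hn; lia.
  - exact: g_le_k.
  - exact: g_mono (ltnW hlt).
have heq : x = (k * cnt_below A c W x) %/ n by apply/eqP; rewrite eqn_leq hg hge.
rewrite /dissat.
have hx : x < k.+1 by [].
apply: (@leq_bigmax_cond _ _ (fun l : 'I_k.+1 => nat_of_ord l) (Ordinal hx)).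
by rewrite /= -heq.
Qed.

Lemma dissat_P c (W : {set C}) : dissat k A c W <= k /\
  dissat k A c W <= (k * cnt_below A c W (dissat k A c W)) %/ n.
Proof.
rewrite /dissat; apply: (big_ind (fun x => x <= k /\ x <= (k * cnt_below A c W x) %/ n)).
- by [].
- by move=> x y hx hy; rewrite /maxn; case: ifP.
- move=> i /eqP h; split; first by rewrite -ltnS ltn_ord.
  by rewrite -h.
Qed.

Lemma dissat_mono c (W W' : {set C}) : 0 < n -> W \subset W' -> dissat k A c W' <= dissat k A c W.
Proof.
move=> hn hW; have [h1 h2] := dissat_P c W'.
apply: P_le_dissat => //; apply: leq_trans h2 _.
by apply: leq_div2r; apply: leq_mul => //; apply: cnt_mono_W.
Qed.

End Aux.

Lemma WsetP (C : finType) (w : nat -> C) j x :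
  reflect (exists2 s, 0 < s <= j & x = w s) (x \in Wset w j).
Proof.
apply: (iffP imsetP) => [[t _ ->]|[s /andP[s0 sj] ->]].
  by exists t.+1 => //; rewrite /= ltn_ord.
have hs : s.-1 < j by lia.
exists (Ordinal hs) => //=; by rewrite prednK.
Qed.

Lemma Wset_mono (C : finType) (w : nat -> C) s t : s <= t -> Wset w s \subset Wset w t.
Proof.
move=> hst; apply/subsetP => x /WsetP [u hu ->]; apply/WsetP; exists u => //; lia.
Qed.

Arguments Wset_mono {C} w {s t}.
Arguments WsetP {C}.
Arguments dissat_mono {n} k {C}.

Theorem mainTheorem4 (n k : nat) (C : finType) (A : 'I_n -> {set C})
    (w : nat -> C) (f : nat -> 'I_n -> rat) (j : nat) :
  0 < n -> 0 < k -> k <= #|C| ->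
  @pjr_exact_run n k C A w f ->
  1 <= j <= k.-1 ->
  (forall t, 1 <= t <= j -> @normal_iteration n k C A w f t) ->
  forall c, c \notin @Wset C w j -> @not_starving n k C A w f j c.
Proof.
move=> hn hk _ [f0 run] hj hnorm c cW i ic.
set W := Wset w j; set L := ell_voter k A W i c; set a := #|A i :&: W| => ha.
have key : forall m, m <= j ->
  (f m i = 1%R /\ forall s, 0 < s <= m -> w s \notin A i) \/
  exists t, [/\ 0 < t <= m, w t \in A i, f m i = f t i &
                forall s, t < s <= m -> w s \notin A i].
  elim=> [_|m IH hm].
    by left; split => // s; lia.
  have hmk : 1 <= m.+1 <= k by lia.
  have [_ _ hnot _ _] := run _ hmk.
  case: (boolP (w m.+1 \in A i)) => hw.
    by right; exists m.+1; split => //; lia.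
  have fe : f m.+1 i = f m i by apply: hnot; rewrite inE.
  have [[h1 h2]|[t [ht htA hft hs]]] := IH (ltnW hm).
    left; split; first by rewrite fe.
    move=> s hs; have [->//|hne] := eqVneq s m.+1; apply: h2; lia.
  right; exists t; split => //; first lia; first by rewrite fe.
  move=> s hs'; have [->//|hne] := eqVneq s m.+1; apply: hs; lia.
have hL0 : (0 < L%:R :> rat)%R by rewrite ltr0n; lia.
have ha0 : (0 <= a%:R :> rat)%R by rewrite ler0n.
have [[h1 _]|[t [ht htA hft hs]]] := key j (leqnn j).
  by rewrite h1 ler_pdivrMr // mul1r; lra.
have htj : 1 <= t <= j by lia.
have [_ hcond] := hnorm t htj.
set L' := ell_voter k A (Wset w t.-1) i (w t).
have eqa : A i :&: Wset w t = A i :&: W.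
  apply/setP => x; rewrite !inE; case xA: (x \in A i) => //=.
  have htj' : t <= j by lia.
  apply/idP/idP; first by move=> hx; apply: (subsetP (Wset_mono w htj')) hx.
  case/WsetP => s hs0 hx; apply/WsetP; exists s => //.
  case: (leqP s t) => hst; first lia.
  by move: (hs s (ltac:(lia))); rewrite -hx xA.
have hLL : L <= L'.
  rewrite /L /ell_voter; apply/bigmax_leqP => c' hc'.
  have ht1 : t.-1 <= j by lia.
  apply: leq_trans (dissat_mono k A c' _ _ hn (Wset_mono w ht1)) _.
  apply: leq_bigmax_cond.
  move: hc'; rewrite !inE => /andP[hn1 ->]; rewrite andbT.
  move: hn1; rewrite negb_or => /andP[hnW _]; rewrite negb_or; apply/andP; split.
    apply/negP => hc; move/negP: hnW; apply.
    by apply: (subsetP (Wset_mono w ht1)) hc.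
  apply/negP => /eqP hc; move/negP: hnW; apply; rewrite hc.
  by apply/WsetP; exists t.
have hlt : #|A i :&: Wset w t.-1| < L'.
  apply: leq_ltn_trans (_ : _ <= a) _.
    rewrite /a -eqa; apply: subset_leq_card; apply: setIS; apply: Wset_mono; lia.
  lia.
have hc := hcond i (ltac:(by rewrite inE)) hlt.
rewrite eqa -/a in hc.
rewrite hft; apply: le_trans hc.
have hL'0 : (0 < L'%:R :> rat)%R by rewrite ltr0n; lia.
have hLL' : (L%:R <= L'%:R :> rat)%R by rewrite ler_nat.
set x := ((L'%:R - a%:R) / L'%:R)%R.
have hx : (x * L'%:R = L'%:R - a%:R :> rat)%R by rewrite /x divfK // gt_eqF.
have hx1 : (x <= 1 :> rat)%R by rewrite /x ler_pdivrMr // mul1r; lra.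
rewrite ler_pdivrMr //.
have := mulr_ge0 (_ : 0 <= 1 - x)%R (_ : 0 <= L'%:R - L%:R :> rat)%R.
move=> /(_ ltac:(lra) ltac:(lra)) hp.
nra.
Qed.
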